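(* Let $T$ be a c.n.u. contraction on $H$ and $(f,g)\in\mathfrak{H}\oplus_\perp\mathfrak{H}$. Then $(f,g)\in\widehat{A_T}$ if and only if $g(\lambda)=\lambda f(\lambda)$ for each $\lambda\in\mathbb{D}_+$ and $\lambda g(\lambda)=f(\lambda)$ for each $\lambda\in\mathbb{D}_-$.
   Context: $H$ is an infinite-dimensional separable complex Hilbert space with inner product $(\cdot,\cdot)_H$; $T\in\mathbb{B}(H)$, $\|T\|\le1$, is completely non-unitary (no nonzero invariant subspace on which $T$ is unitary). $\mathbb{K}=\ker(I-T^*T)$. $\mathbb{H}=H\oplus_\perp H$ with $[(x_1,x_2),(y_1,y_2)]=i(x_1,y_1)_H-i(x_2,y_2)_H$; $S^{\perp_s}=\{a:[a,b]=0\ \forall b\in S\}$; $A_T=\{(x,Tx):x\in\mathbb{K}\}$. $\mathbb{D}_\pm$ are two copies of the open unit disc with centers $0_\pm$; for $\lambda\in\mathbb{D}_\pm$, $\bar\lambda$ is regarded as a point of $\mathbb{D}_\mp$. $N_\lambda=\{(x,\lambda x):x\in H\}\cap A_T^{\perp_s}$ for $\lambda\in\mathbb{D}_+$, $N_\lambda=\{(\lambda x,x):x\in H\}\cap A_T^{\perp_s}$ for $\lambda\in\mathbb{D}_-$. $E_\lambda=pr_1(N_\lambda)$ ($\lambda\in\mathbb{D}_+$), $E_\lambda=pr_2(N_\lambda)$ ($\lambda\in\mathbb{D}_-$), with $pr_i$ the projection of $\mathbb{H}$ onto the $i$-th copy of $H$. $F^\dagger_\lambda=E_{\bar\lambda}$,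 $F_\lambda$ = continuous conjugate-linear functionals on $F^\dagger_\lambda$. For $x\in H$, $\hat x(\lambda)\in F_\lambda$ is $\omega\mapsto(x,\omega)_H$. The map $x\mapsto\hat x$ is injective; $\mathfrak{H}=\{\hat x:x\in H\}$ with inner product $(\hat x,\hat y)_{\mathfrak{H}}=(x,y)_H$ (this is the reproducing kernel Hilbert space of sections of $F$ with kernel $K(\lambda,\mu)=\iota_\lambda^\dagger\iota_\mu$). For $S\subseteq\mathbb{H}$, $\hat S=\{(\hat x,\hat y):(x,y)\in S\}$. *)

(* Defs.v *)
From HB Require Import structures.
From mathcomp Require Import all_boot all_order all_algebra.
From mathcomp Require Import complex.
From mathcomp Require Import reals.
From mathcomp Require Import classical_sets.

Set Implicit Arguments.
Unset Strict Implicit.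
Unset Printing Implicit Defensive.

Import Order.TTheory GRing.Theory Num.Theory.
Local Open Scope ring_scope.
Local Open Scope classical_set_scope.

Section Hilbert.
Variables (R : realType) (H : lmodType R[i]) (ip : H -> H -> R[i]).

Definition is_inner_product :=
  [/\ (forall (a : R[i]) (x y z : H), ip (a *: x + y) z = a * ip x z + ip y z),
      (forall x y : H, ip y x = (ip x y)^*),
      (forall x : H, 0 <= ip x x) &
      (forall x : H, ip x x = 0 -> x = 0)].

Definition hnorm (x : H) : R[i] := sqrtC (ip x x).

Definition hconverges (u : nat -> H) (l : H) :=
  forall e : R[i], 0 < e -> exists N : nat, forall n, (N <= n)%N -> hnorm (u n - l) < e.

Definition hcauchy (u : nat -> H) :=
  forall e : R[i], 0 < e -> exists N : nat,
    forall m n, (N <= m)%N -> (N <= n)%N -> hnorm (u m - u n) < e.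

Definition hcomplete := forall u : nat -> H, hcauchy u -> exists l, hconverges u l.

Definition hseparable :=
  exists d : nat -> H, forall (x : H) (e : R[i]), 0 < e -> exists n, hnorm (x - d n) < e.

Definition hinfinite_dim :=
  forall n : nat, exists v : 'I_n -> H,
    forall i j : 'I_n, ip (v i) (v j) = (i == j)%:R.

Definition hilbert_space :=
  [/\ is_inner_product, hcomplete, hseparable & hinfinite_dim].

Definition hlinear (T : H -> H) :=
  forall (a : R[i]) (x y : H), T (a *: x + y) = a *: T x + T y.

Definition is_adjoint (T Tstar : H -> H) := forall x y : H, ip (T x) y = ip x (Tstar y).

Definition contraction (T : H -> H) := forall x : H, hnorm (T x) <= hnorm x.

Definition closed_subspace (M : set H) :=
  [/\ M 0,
      (forall (a : R[i]) (x y : H), M x -> M y -> M (a *: x + y)) &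
      (forall (u : nat -> H) (l : H), (forall n, M (u n)) -> hconverges u l -> M l)].

Definition cnu (T : H -> H) :=
  forall M : set H, closed_subspace M -> T @` M = M ->
    (forall x y, M x -> M y -> ip (T x) (T y) = ip x y) -> M = [set 0].

Definition Kset (T Tstar : H -> H) : set H := [set x | x - Tstar (T x) = 0].

Definition sform (a b : H * H) : R[i] := 'i * ip a.1 b.1 - 'i * ip a.2 b.2.

Definition s_orth (S : set (H * H)) : set (H * H) :=
  [set a | forall b, S b -> sform a b = 0].

Definition A_T (T Tstar : H -> H) : set (H * H) :=
  [set (x, T x) | x in Kset T Tstar].

(* points of D_+ (Dp z) and D_- (Dm z); membership in the disc is |z| < 1 *)
Inductive dpt := Dp of R[i] | Dm of R[i].

Definition in_disc (l : dpt) : Prop :=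
  match l with Dp z => `|z| < 1 | Dm z => `|z| < 1 end.

Definition dconj (l : dpt) : dpt :=
  match l with Dp z => Dm z^* | Dm z => Dp z^* end.

Definition N_ (T Tstar : H -> H) (l : dpt) : set (H * H) :=
  match l with
  | Dp z => [set a | exists x, a = (x, z *: x)] `&` s_orth (A_T T Tstar)
  | Dm z => [set a | exists x, a = (z *: x, x)] `&` s_orth (A_T T Tstar)
  end.

Definition E_ (T Tstar : H -> H) (l : dpt) : set H :=
  match l with
  | Dp _ => fst @` N_ T Tstar l
  | Dm _ => snd @` N_ T Tstar l
  end.

Definition Fdag (T Tstar : H -> H) (l : dpt) : set H := E_ T Tstar (dconj l).

(* A section of F: at each lambda, a conjugate-linear functional on F^dagger_lambda,
   represented by a function H -> R[i] whose values off F^dagger_lambda are irrelevant. *)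
Definition section := dpt -> H -> R[i].

Definition hat (x : H) : section := fun _ w => ip x w.

Definition sec_eq (T Tstar : H -> H) (f g : section) :=
  forall l w, Fdag T Tstar l w -> f l w = g l w.

Definition in_hat (T Tstar : H -> H) (S : set (H * H)) (fg : section * section) :=
  exists x y, S (x, y) /\ sec_eq T Tstar (hat x) fg.1 /\ sec_eq T Tstar (hat y) fg.2.

End Hilbert.

(* Main.v *)
Require Import Defs.
From HB Require Import structures.
From mathcomp Require Import all_boot all_order all_algebra.
From mathcomp Require Import complex.
From mathcomp Require Import reals.
From mathcomp Require Import classical_sets.
From mathcomp Require Import ring lra.

Import Order.TTheory GRing.Theory Num.Theory.
Local Open Scope ring_scope.
Local Open Scope classical_set_scope.

Local Notation Rc := complex.Re.
Local Notation Ic := complex.Im.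

Section Basic.
Variables (R : realType) (H : lmodType R[i]) (ip : H -> H -> R[i]) (T Ts : H -> H).
Hypotheses (hip : is_inner_product ip) (hT : hlinear T) (hadj : is_adjoint ip T Ts)
  (hcon : contraction ip T) (hcomp : hcomplete ip).

Lemma ipLin a x y z : ip (a *: x + y) z = a * ip x z + ip y z.
Proof. by case: hip => h _ _ _; apply: h. Qed.
Lemma ipC x y : ip y x = Num.conj (ip x y).
Proof. by case: hip => _ h _ _; apply: h. Qed.
Lemma ipP x : 0 <= ip x x.
Proof. by case: hip => _ _ h _; apply: h. Qed.
Lemma ipD x : ip x x = 0 -> x = 0.
Proof. by case: hip => _ _ _ h; apply: h. Qed.

Lemma ip0l z : ip 0 z = 0.
Proof.
have h := ipLin 1 0 0 z; rewrite scaler0 addr0 mul1r in h.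
by apply: (addrI (ip 0 z)); rewrite addr0 -h.
Qed.
Lemma ipDl x y z : ip (x + y) z = ip x z + ip y z.
Proof. by have := ipLin 1 x y z; rewrite scale1r mul1r. Qed.
Lemma ipZl a x z : ip (a *: x) z = a * ip x z.
Proof. by have := ipLin a x 0 z; rewrite !addr0 ip0l addr0. Qed.
Lemma ipNl x z : ip (- x) z = - ip x z.
Proof. by rewrite -scaleN1r ipZl mulN1r. Qed.
Lemma ipBl x y z : ip (x - y) z = ip x z - ip y z.
Proof. by rewrite ipDl ipNl. Qed.
Lemma ip0r z : ip z 0 = 0.
Proof. by rewrite ipC ip0l rmorph0. Qed.
Lemma ipDr x y z : ip x (y + z) = ip x y + ip x z.
Proof. by rewrite !(ipC _ x) ipDl rmorphD. Qed.
Lemma ipZr a x y : ip x (a *: y) = Num.conj a * ip x y.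
Proof. by rewrite !(ipC _ x) ipZl rmorphM. Qed.
Lemma ipNr x z : ip x (- z) = - ip x z.
Proof. by rewrite -scaleN1r ipZr rmorphN rmorph1 mulN1r. Qed.
Lemma ipBr x y z : ip x (y - z) = ip x y - ip x z.
Proof. by rewrite ipDr ipNr. Qed.

Lemma conjR (r : R) : Num.conj (r%:C)%C = (r%:C)%C.
Proof. by apply/eqP; rewrite eq_complex /= oppr0 !eqxx. Qed.
Lemma ReJ (q : R[i]) : Rc (Num.conj q) = Rc q.
Proof. by case: q. Qed.
Lemma ReMR (r : R) (q : R[i]) : Rc ((r%:C)%C * q) = r * Rc q.
Proof. case: q => a b; simpc; rewrite /=; ring. Qed.
Lemma ReMi (q : R[i]) : Rc ('i%C * q) = - Ic q.
Proof. case: q => a b; simpc; rewrite /=; ring. Qed.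
Lemma ReMJi (q : R[i]) : Rc (Num.conj 'i%C * q) = Ic q.
Proof. case: q => a b; simpc; rewrite /=; ring. Qed.
Lemma ReIm0 (q : R[i]) : Rc q = 0 -> Ic q = 0 -> q = 0.
Proof. by case: q => a b /= -> ->. Qed.

Lemma ReD (p q : R[i]) : Rc (p + q) = Rc p + Rc q.
Proof. by case: p; case: q. Qed.
Lemma ReN (p : R[i]) : Rc (- p) = - Rc p.
Proof. by case: p. Qed.

Definition g a b := Rc (ip a b).

Lemma gC a b : g a b = g b a.
Proof. by rewrite /g ipC ReJ. Qed.
Lemma gDl a b c : g (a + b) c = g a c + g b c.
Proof. by rewrite /g ipDl ReD. Qed.
Lemma gDr a b c : g c (a + b) = g c a + g c b.
Proof. by rewrite /g ipDr ReD. Qed.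
Lemma gNl a c : g (- a) c = - g a c.
Proof. by rewrite /g ipNl ReN. Qed.
Lemma gNr a c : g c (- a) = - g c a.
Proof. by rewrite /g ipNr ReN. Qed.
Lemma gBl a b c : g (a - b) c = g a c - g b c.
Proof. by rewrite gDl gNl. Qed.
Lemma gBr a b c : g c (a - b) = g c a - g c b.
Proof. by rewrite gDr gNr. Qed.
Lemma gZl (r : R) a b : g ((r%:C)%C *: a) b = r * g a b.
Proof. by rewrite /g ipZl ReMR. Qed.
Lemma gZr (r : R) a b : g b ((r%:C)%C *: a) = r * g b a.
Proof. by rewrite /g ipZr conjR ReMR. Qed.
Lemma g0l a : g 0 a = 0.
Proof. by rewrite /g ip0l. Qed.
Lemma g0r a : g a 0 = 0.
Proof. by rewrite /g ip0r. Qed.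

Lemma ipaa a : ip a a = ((g a a)%:C)%C.
Proof.
have := ipP a; rewrite lecE /g; case: (ip a a) => p q /= /andP[/eqP -> _].
by [].
Qed.
Lemma g_ge0 a : 0 <= g a a.
Proof. by have := ipP a; rewrite lecE /g => /andP[]. Qed.
Lemma g_eq0 a : g a a = 0 -> a = 0.
Proof. by move=> h; apply: ipD; rewrite ipaa h. Qed.

Lemma ip_zero a b : g a b = 0 -> g a ('i%C *: b) = 0 -> ip a b = 0.
Proof.
rewrite /g ipZr ReMJi => h1 h2; exact: ReIm0.
Qed.

Definition nn a := Num.sqrt (g a a).
Lemma nn_ge0 a : 0 <= nn a.
Proof. exact: sqrtr_ge0. Qed.
Lemma nn_sq a : nn a ^+ 2 = g a a.
Proof. by rewrite sqr_sqrtr // g_ge0. Qed.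

Lemma hnormE a : hnorm ip a = ((nn a)%:C)%C.
Proof.
rewrite /hnorm ipaa -nn_sq.
have -> : ((nn a ^+ 2)%:C)%C = ((nn a)%:C)%C ^+ 2 by rewrite rmorphXn.
by rewrite sqrCK // ler0c nn_ge0.
Qed.

Lemma CS2 a b : g a b ^+ 2 <= g a a * g b b.
Proof.
have q t : 0 <= g a a - 2 * t * g a b + t ^+ 2 * g b b.
  have := g_ge0 (a - (t%:C)%C *: b).
  rewrite !gBl !gBr !gZl !gZr (gC b a) => h.
  have -> : g a a - 2 * t * g a b + t ^+ 2 * g b b =
     g a a - t * g a b - (t * g a b - t * (t * g b b)) by ring.
  exact: h.
have hC := g_ge0 b; have hA := g_ge0 a.
have [C0|Cpos] := eqVneq (g b b) 0.
  rewrite C0 mulr0.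
  have [B0|Bn0] := eqVneq (g a b) 0; first by rewrite B0 expr0n.
  have := q ((g a a + 1) / (2 * g a b)); rewrite C0 mulr0 addr0.
  have -> : 2 * ((g a a + 1) / (2 * g a b)) * g a b = g a a + 1.
    by field; rewrite Bn0.
  lra.
have Cp : 0 < g b b by rewrite lt_def Cpos hC.
have := q (g a b / g b b).
set t := g a b / g b b.
have tC : t * g b b = g a b by rewrite /t divfK.
rewrite -tC => h.
have e : t ^+ 2 * g b b = t * (t * g b b) by rewrite expr2 mulrA.
rewrite e tC in h.
have : 0 <= g b b * (g a a - t * (t * g b b)) by apply: mulr_ge0 => //; rewrite tC; nra.
rewrite tC; nra.
Qed.

Lemma CS a b : `|g a b| <= nn a * nn b.
Proof.
rewrite -sqrtr_sqr /nn -sqrtrM ?g_ge0 //.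
exact: ler_wsqrtr (CS2 a b).
Qed.

Lemma CSr a b : g a b <= nn a * nn b.
Proof. exact: le_trans (ler_norm _) (CS a b). Qed.

Lemma nn_tri a b : nn (a + b) <= nn a + nn b.
Proof.
have h1 := CSr a b.
have e : g (a + b) (a + b) = nn a ^+ 2 + 2 * g a b + nn b ^+ 2.
  by rewrite !nn_sq gDl !gDr (gC b a); ring.
have P : 0 <= nn a + nn b by apply: addr_ge0; apply: nn_ge0.
rewrite {1}/nn e -(ger0_norm P) -sqrtr_sqr; apply: ler_wsqrtr.
have := nn_ge0 a; have := nn_ge0 b; nra.
Qed.

Lemma nnZ (r : R) a : nn ((r%:C)%C *: a) = `|r| * nn a.
Proof.
rewrite /nn gZl gZr mulrA -expr2 sqrtrM ?sqr_ge0 // sqrtr_sqr //.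
Qed.

Lemma nnN a : nn (- a) = nn a.
Proof. by rewrite /nn gNl gNr opprK. Qed.

Lemma nnB a b : nn (a - b) = nn (b - a).
Proof. by rewrite -nnN opprB. Qed.

Lemma nn0 : nn 0 = 0.
Proof. by rewrite /nn g0l sqrtr0. Qed.

Lemma eps0 (x : R) : (forall eps, 0 < eps -> `|x| <= eps) -> x = 0.
Proof.
move=> h; apply/eqP; rewrite -normr_eq0; apply/eqP.
apply: le_anti; rewrite normr_ge0 andbT.
apply/ler_addgt0Pr => e ep; rewrite add0r; exact: h.
Qed.


Lemma i_neq0 : ('i%C : R[i]) != 0.
Proof. by rewrite eq_complex /= oner_eq0 andbF. Qed.

Lemma TL a x y : T (a *: x + y) = a *: T x + T y.
Proof. exact: hT. Qed.
Lemma T0 : T 0 = 0.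
Proof.
have h := TL 1 0 0; rewrite scaler0 addr0 scale1r in h.
by apply: (addrI (T 0)); rewrite addr0 -h.
Qed.
Lemma TD x y : T (x + y) = T x + T y.
Proof. by have := TL 1 x y; rewrite !scale1r. Qed.
Lemma TZ a x : T (a *: x) = a *: T x.
Proof. by have := TL a x 0; rewrite !addr0 T0 addr0. Qed.
Lemma TN x : T (- x) = - T x.
Proof. by rewrite -scaleN1r TZ scaleN1r. Qed.
Lemma TB x y : T (x - y) = T x - T y.
Proof. by rewrite TD TN. Qed.

Lemma ext u v : (forall z, ip z u = ip z v) -> u = v.
Proof.
move=> h; apply/eqP; rewrite -subr_eq0; apply/eqP; apply: ipD.
by rewrite ipBr h subrr.
Qed.

Lemma adj x y : ip (T x) y = ip x (Ts y).
Proof. exact: hadj. Qed.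
Lemma adj' x y : ip (Ts x) y = ip x (T y).
Proof. by rewrite ipC -adj -ipC. Qed.

Lemma TsL a u v : Ts (a *: u + v) = a *: Ts u + Ts v.
Proof.
apply: ext => z; rewrite -adj ipDr ipZr ipDr ipZr !adj //.
Qed.
Lemma Ts0 : Ts 0 = 0.
Proof.
have h := TsL 1 0 0; rewrite scaler0 addr0 scale1r in h.
by apply: (addrI (Ts 0)); rewrite addr0 -h.
Qed.
Lemma TsD x y : Ts (x + y) = Ts x + Ts y.
Proof. by have := TsL 1 x y; rewrite !scale1r. Qed.
Lemma TsZ a x : Ts (a *: x) = a *: Ts x.
Proof. by have := TsL a x 0; rewrite !addr0 Ts0 addr0. Qed.
Lemma TsN x : Ts (- x) = - Ts x.
Proof. by rewrite -scaleN1r TsZ scaleN1r. Qed.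
Lemma TsB x y : Ts (x - y) = Ts x - Ts y.
Proof. by rewrite TsD TsN. Qed.

Definition D u := u - Ts (T u).
Definition Ds u := u - T (Ts u).

Lemma KsetE k : Kset T Ts k <-> D k = 0.
Proof. by []. Qed.

Lemma ipD_sym x y : ip x (D y) = ip (D x) y.
Proof. by rewrite /D ipBr ipBl adj' -adj. Qed.
Lemma ipDs_sym x y : ip x (Ds y) = ip (Ds x) y.
Proof. by rewrite /Ds ipBr ipBl adj -adj'. Qed.
Lemma TsDs u : Ts (Ds u) = D (Ts u).
Proof. by rewrite /Ds /D TsB. Qed.
Lemma TD' u : T (D u) = Ds (T u).
Proof. by rewrite /Ds /D TB. Qed.
Lemma TsT y : Ts (T y) = y - D y.
Proof. by rewrite /D opprB addrC subrK. Qed.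
Lemma TTs y : T (Ts y) = y - Ds y.
Proof. by rewrite /Ds opprB addrC subrK. Qed.
Lemma DZ a x : D (a *: x) = a *: D x.
Proof. by rewrite /D TZ TsZ scalerBr. Qed.
Lemma KsetZ a k : Kset T Ts k -> Kset T Ts (a *: k).
Proof. by rewrite !KsetE DZ => ->; rewrite scaler0. Qed.

Lemma nnT x : nn (T x) <= nn x.
Proof. by have := hcon x; rewrite !hnormE lecR. Qed.

Lemma nnTs x : nn (Ts x) <= nn x.
Proof.
have e : g (Ts x) (Ts x) = g (T (Ts x)) x by rewrite /g adj.
have h1 := CSr (T (Ts x)) x.
have h2 := nnT (Ts x).
have h0 := nn_ge0 (Ts x); have h3 := nn_ge0 x.
have : nn (Ts x) ^+ 2 <= nn (Ts x) * nn x.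
  rewrite nn_sq e; apply: le_trans h1 _; exact: ler_wpM2r.
nra.
Qed.

Lemma nn_iter (V : H -> H) (hV : forall x, nn (V x) <= nn x) n a :
  nn (iter n V a) <= nn a.
Proof. elim: n => [//|n IH] /=; exact: le_trans (hV _) IH. Qed.

Lemma FdagDp z w : Fdag ip T Ts (Dp z) w <->
  (forall k, Kset T Ts k -> 'i%C * ip (Num.conj z *: w) k - 'i%C * ip w (T k) = 0).
Proof.
split.
  move=> [a [[x ->] hs] /= <-] k hk.
  exact: (hs (k, T k) (ex_intro2 _ _ k hk erefl)).
move=> h; exists (Num.conj z *: w, w) => //; split; first by exists w.
by move=> b [k hk <-]; apply: h.
Qed.

Lemma FdagDm z w : Fdag ip T Ts (Dm z) w <->
  (forall k, Kset T Ts k -> 'i%C * ip w k - 'i%C * ip (Num.conj z *: w) (T k) = 0).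
Proof.
split.
  move=> [a [[x ->] hs] /= <-] k hk.
  exact: (hs (k, T k) (ex_intro2 _ _ k hk erefl)).
move=> h; exists (w, Num.conj z *: w) => //; split; first by exists w.
by move=> b [k hk <-]; apply: h.
Qed.

Lemma i_cancel (p q : R[i]) : 'i%C * p - 'i%C * q = 0 -> p = q.
Proof.
rewrite -mulrBr => /eqP; rewrite mulf_eq0 (negbTE i_neq0) /= subr_eq0.
by move/eqP.
Qed.

Lemma fwdDp k z w : Kset T Ts k -> Fdag ip T Ts (Dp z) w ->
  ip (T k) w = z * ip k w.
Proof.
move=> hk /FdagDp /(_ k hk) /i_cancel; rewrite ipZl (ipC k w) (ipC (T k) w).
rewrite -rmorphM => /(congr1 Num.conj); rewrite !conjCK => ->; done.
Qed.

Lemma fwdDm k z w : Kset T Ts k -> Fdag ip T Ts (Dm z) w ->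
  ip k w = z * ip (T k) w.
Proof.
move=> hk /FdagDm /(_ k hk) /i_cancel; rewrite ipZl (ipC k w) (ipC (T k) w).
rewrite -rmorphM => /(congr1 Num.conj); rewrite !conjCK => ->; done.
Qed.


Fixpoint ps (V : H -> H) (r : R) (a : H) (N : nat) : H :=
  if N is N'.+1 then ps V r a N' + ((r ^+ N')%:C)%C *: iter N' V a else 0.

Lemma pos_e (e : R[i]) : 0 < e -> e = ((Rc e)%:C)%C /\ 0 < Rc e.
Proof.
rewrite ltcE /=; case: e => p q /= /andP[/eqP -> hp]; split => //.
Qed.

Lemma small (C eps r : R) : 0 <= C -> 0 < eps -> 0 <= r -> r <= 1/2 ->
  exists N0, forall n, (N0 <= n)%N -> C * r ^+ n < eps.
Proof.
move=> C0 ep r0 r1.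
have b0 : 0 <= C / eps by apply: divr_ge0 => //; apply: ltW.
exists (Num.bound (C / eps)) => n hn.
have hb := archi_boundP b0.
have h2 : (Num.bound (C / eps))%:R <= (2 ^+ n : R).
  rewrite -natrX ler_nat; apply: leq_trans hn _; apply: ltnW; exact: ltn_expl.
have Q0 : 0 < (2 ^+ n : R) by apply: exprn_gt0.
have h3 : C < eps * 2 ^+ n.
  rewrite -ltr_pdivrMl // mulrC; exact: lt_le_trans hb h2.
have h4 : r ^+ n * 2 ^+ n <= 1.
  rewrite -exprMn; apply: exprn_ile1; [by apply: mulr_ge0 | lra].
have h5 : 0 <= r ^+ n by apply: exprn_ge0.
rewrite -(ltr_pM2r Q0) -mulrA.
apply: le_lt_trans h3; rewrite -[X in _ <= X]mulr1; apply: ler_wpM2l => //.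
Qed.

Lemma ps_tail (V : H -> H) (hV : forall x, nn (V x) <= nn x) r a N k :
  0 <= r -> r <= 1/2 ->
  nn (ps V r a (N + k) - ps V r a N) <= 2 * r ^+ N * nn a - 2 * r ^+ (N + k) * nn a.
Proof.
move=> r0 r1; elim: k => [|k IH]; first by rewrite addn0 subrr nn0 subrr.
rewrite addnS /= addrAC.
apply: le_trans (nn_tri _ _) _.
rewrite nnZ ger0_norm; last by apply: exprn_ge0.
have hi := nn_iter V hV (N + k) a.
have P0 : 0 <= r ^+ (N + k) by apply: exprn_ge0.
have na0 := nn_ge0 a.
have : r ^+ (N + k) * nn (iter (N + k) V a) <= r ^+ (N + k) * nn a.
  exact: ler_wpM2l.
have : 0 <= r ^+ (N + k) * nn a * (1 - 2 * r).
  by apply: mulr_ge0; [apply: mulr_ge0 | lra].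
rewrite exprS; nra.
Qed.

Lemma ps_conv (V : H -> H) (hV : forall x, nn (V x) <= nn x) r a :
  0 <= r -> r <= 1/2 -> exists w, hconverges ip (ps V r a) w.
Proof.
move=> r0 r1; apply: hcomp => e /pos_e [-> ep].
have na0 := nn_ge0 a.
have [N0 hN0] := @small (2 * nn a) _ r (mulr_ge0 (ler0n _ 2) na0) ep r0 r1.
exists N0 => m n hm hn.
rewrite hnormE ltcR.
wlog nm : m n hm hn / (n <= m)%N.
  move=> W; have [|/ltnW] := leqP n m; first exact: W.
  by move=> mn; rewrite nnB; apply: W.
rewrite -(subnKC nm).
apply: le_lt_trans (ps_tail V hV r a n (m - n) r0 r1) _.
have := hN0 n hn.
have : 0 <= 2 * r ^+ (n + (m - n)) * nn a.
  by apply: mulr_ge0 => //; apply: mulr_ge0 => //; apply: exprn_ge0.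
lra.
Qed.

Lemma nnTD u : nn (T u) <= nn u.
Proof. exact: nnT. Qed.

Lemma tele r a N :
  ps Ts r a N - ((r%:C)%C) *: Ts (ps Ts r a N) = a - ((r ^+ N)%:C)%C *: iter N Ts a.
Proof.
elim: N => [|N IH] /=.
  by rewrite Ts0 scaler0 subr0 expr0 rmorph1 scale1r subrr.
rewrite TsD TsZ scalerDr scalerA -rmorphM opprD addrACA IH exprS.
by rewrite addrA subrK.
Qed.

Lemma gDK y k : Kset T Ts k -> g (D y) k = 0.
Proof. by move=> hk; rewrite /g -ipD_sym (_ : D k = 0) ?ip0r. Qed.

Lemma g_adj x k : g x (T k) = g (Ts x) k.
Proof. by rewrite /g adj'. Qed.

Lemma ReIm_K (X : H -> R[i]) :
  (forall k, X ('i%C *: k) = Num.conj 'i%C * X k) ->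
  (forall k, Kset T Ts k -> Rc (X k) = 0) ->
  forall k, Kset T Ts k -> X k = 0.
Proof.
move=> hX hR k hk; apply: ReIm0; first exact: hR.
by rewrite -ReMJi -hX; apply: hR; apply: KsetZ.
Qed.

Lemma conv_small (u : nat -> H) w (eps : R) : hconverges ip u w -> 0 < eps ->
  exists N0, forall n, (N0 <= n)%N -> nn (w - u n) < eps.
Proof.
move=> hc ep; have : 0 < ((eps%:C)%C : R[i]) by rewrite ltcR.
move=> /hc [N0 hN0]; exists N0 => n /hN0; by rewrite hnormE ltcR nnB.
Qed.

Lemma memDm r u w : 0 < r -> r <= 1/2 -> hconverges ip (ps Ts r (D u)) w ->
  Fdag ip T Ts (Dm ((r%:C)%C)) w.
Proof.
move=> r0 r1 hc; apply/FdagDm; rewrite conjR.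
pose X k := ip w k - ip ((r%:C)%C *: w) (T k).
suff: forall k, Kset T Ts k -> X k = 0.
  by move=> h k hk; rewrite -mulrBr; have := h k hk; rewrite /X => ->; rewrite mulr0.
apply: ReIm_K.
  by move=> k; rewrite /X TZ !ipZr mulrBr.
move=> k hk; rewrite /X ReD ReN ipZl ReMR -/(g w k) -/(g w (T k)).
apply: eps0 => eps ep.
set s := ps Ts r (D u).
have Ck : 0 <= nn k + nn (T k) + 1 by have := nn_ge0 k; have := nn_ge0 (T k); lra.
have pos : 0 < 2 * (nn k + nn (T k) + 1) by have := nn_ge0 k; have := nn_ge0 (T k); lra.
have [N1 h1] := conv_small _ _ _ hc (divr_gt0 ep pos).
have [N2 h2] := @small (nn (D u) * nn k) (eps / 2) r (mulr_ge0 (nn_ge0 _) (nn_ge0 _)) (divr_gt0 ep (ltr0n _ 2)) (ltW r0) r1.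
pose N := maxn N1 N2.
have {h1}h1 := h1 N (leq_maxl _ _); have {h2}h2 := h2 N (leq_maxr _ _).
have e1 : g w k - r * g w (T k) =
  (g (w - s N) k - r * g (w - s N) (T k)) +
  (g (D u) k - r ^+ N * g (iter N Ts (D u)) k).
  have e0 : g (D u) k - r ^+ N * g (iter N Ts (D u)) k = g (s N) k - r * g (s N) (T k).
    by rewrite -gZl -gBl -tele gBl gZl -g_adj.
  rewrite e0 !gBl; ring.
rewrite e1 gDK // add0r.
have b1 := CS (w - s N) k.
have b2 := CS (w - s N) (T k).
have b3 := CS (iter N Ts (D u)) k.
have b4 := nn_iter Ts nnTs N (D u).
have P0 : 0 <= r ^+ N by apply: exprn_ge0; apply: ltW.
have n1 := nn_ge0 (w - s N); have n2 := nn_ge0 k; have n3 := nn_ge0 (T k).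
have n4 := nn_ge0 (iter N Ts (D u)); have n5 := nn_ge0 (D u).
have c1 : `|r * g (w - s N) (T k)| <= nn (w - s N) * nn (T k).
  rewrite normrM ger0_norm ?(ltW r0) //.
  apply: le_trans (ler_wpM2l (ltW r0) b2) _.
  rewrite -[X in _ <= X]mul1r; apply: ler_wpM2r; [exact: mulr_ge0 | lra].
have c2 : `|r ^+ N * g (iter N Ts (D u)) k| <= nn (D u) * nn k * r ^+ N.
  rewrite normrM ger0_norm // mulrC; apply: ler_wpM2r => //.
  apply: le_trans b3 _; exact: ler_wpM2r.
have c3 : nn (w - s N) * (nn k + nn (T k) + 1) <= eps / 2.
  have q : 0 < 2 * (nn k + nn (T k) + 1) by lra.
  move: h1; rewrite ltr_pdivlMr // => h1; lra.
have c4 : nn (w - s N) * (nn k + nn (T k)) <= nn (w - s N) * (nn k + nn (T k) + 1).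
  apply: ler_wpM2l => //; lra.
have := ler_normD (g (w - s N) k) (- (r * g (w - s N) (T k))).
rewrite normrN.
have := ler_normD (g (w - s N) k - r * g (w - s N) (T k)) (- (r ^+ N * g (iter N Ts (D u)) k)).
rewrite normrN.
nra.
Qed.

Lemma gTs_ps r u k N : Kset T Ts k ->
  g (Ts (ps T r (Ds u) N.+1)) k = r * g (ps T r (Ds u) N) k.
Proof.
move=> hk; elim: N => [|N IH].
  rewrite /= expr0 rmorph1 scale1r add0r TsDs gDK // g0l mulr0 //.
have e : ps T r (Ds u) N.+2 = ps T r (Ds u) N.+1 +
   ((r ^+ N.+1)%:C)%C *: T (iter N T (Ds u)) by [].
rewrite e TsD TsZ TsT gDl gZl gBl gDK // subr0 IH.
have e2 : ps T r (Ds u) N.+1 = ps T r (Ds u) N + ((r ^+ N)%:C)%C *: iter N T (Ds u) by [].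
rewrite e2 gDl gZl exprS; ring.
Qed.

Lemma memDp r u w : 0 < r -> r <= 1/2 -> hconverges ip (ps T r (Ds u)) w ->
  Fdag ip T Ts (Dp ((r%:C)%C)) w.
Proof.
move=> r0 r1 hc; apply/FdagDp; rewrite conjR.
pose X k := ip ((r%:C)%C *: w) k - ip w (T k).
suff: forall k, Kset T Ts k -> X k = 0.
  by move=> h k hk; rewrite -mulrBr; have := h k hk; rewrite /X => ->; rewrite mulr0.
apply: ReIm_K.
  by move=> k; rewrite /X TZ !ipZr mulrBr.
move=> k hk; rewrite /X ReD ReN ipZl ReMR -/(g w k) -/(g w (T k)).
apply: eps0 => eps ep.
set s := ps T r (Ds u).
have pos : 0 < 2 * (nn k + nn (T k) + 1) by have := nn_ge0 k; have := nn_ge0 (T k); lra.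
have [N1 h1] := conv_small _ _ _ hc (divr_gt0 ep pos).
have [N2 h2] := @small (nn (Ds u) * nn k) (eps / 2) r (mulr_ge0 (nn_ge0 _) (nn_ge0 _)) (divr_gt0 ep (ltr0n _ 2)) (ltW r0) r1.
pose N := maxn N1 N2.
have {h1}h1 := h1 N.+1 (leqW (leq_maxl _ _)); have {h2}h2 := h2 N (leq_maxr _ _).
have e0 : r * g (s N.+1) k - g (s N.+1) (T k) = r ^+ N.+1 * g (iter N T (Ds u)) k.
  rewrite g_adj gTs_ps //.
  have e2 : s N.+1 = s N + ((r ^+ N)%:C)%C *: iter N T (Ds u) by [].
  rewrite e2 gDl gZl exprS; ring.
have e1 : r * g w k - g w (T k) =
  (r * g (w - s N.+1) k - g (w - s N.+1) (T k)) +
  (r ^+ N.+1 * g (iter N T (Ds u)) k).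
  rewrite -e0 !gBl; ring.
rewrite e1.
have b1 := CS (w - s N.+1) k.
have b2 := CS (w - s N.+1) (T k).
have b3 := CS (iter N T (Ds u)) k.
have b4 := nn_iter T nnT N (Ds u).
have P0 : 0 <= r ^+ N by apply: exprn_ge0; apply: ltW.
have n1 := nn_ge0 (w - s N.+1); have n2 := nn_ge0 k; have n3 := nn_ge0 (T k).
have n4 := nn_ge0 (iter N T (Ds u)); have n5 := nn_ge0 (Ds u).
have c1 : `|r * g (w - s N.+1) k| <= nn (w - s N.+1) * nn k.
  rewrite normrM ger0_norm ?(ltW r0) //.
  apply: le_trans (ler_wpM2l (ltW r0) b1) _.
  rewrite -[X in _ <= X]mul1r; apply: ler_wpM2r; [exact: mulr_ge0 | lra].
have c2 : `|r ^+ N.+1 * g (iter N T (Ds u)) k| <= nn (Ds u) * nn k * r ^+ N.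
  rewrite normrM ger0_norm; last by apply: exprn_ge0; apply: ltW.
  rewrite exprS.
  have : `|g (iter N T (Ds u)) k| <= nn (Ds u) * nn k.
    apply: le_trans b3 _; exact: ler_wpM2r.
  have := normr_ge0 (g (iter N T (Ds u)) k).
  move=> q1 q2.
  have : r * r ^+ N <= r ^+ N by rewrite -[X in _ <= X]mul1r; apply: ler_wpM2r => //; lra.
  nra.
have c3 : nn (w - s N.+1) * (nn k + nn (T k) + 1) <= eps / 2.
  move: h1; rewrite ltr_pdivlMr // => h1; lra.
have c4 : nn (w - s N.+1) * (nn k + nn (T k)) <= nn (w - s N.+1) * (nn k + nn (T k) + 1).
  apply: ler_wpM2l => //; lra.
have := ler_normD (r * g (w - s N.+1) k) (- g (w - s N.+1) (T k)).
rewrite normrN.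
have := ler_normD (r * g (w - s N.+1) k - g (w - s N.+1) (T k)) (r ^+ N.+1 * g (iter N T (Ds u)) k).
nra.
Qed.

Fixpoint rs (b : nat -> R) (r : R) (N : nat) : R :=
  if N is N'.+1 then rs b r N' + r ^+ N' * b N' else 0.

Lemma extract (b : nat -> R) (C : R) : (forall n, `|b n| <= C) ->
  (forall r, 0 < r -> r <= 1/2 -> forall eps, 0 < eps ->
     exists N0, forall N, (N0 <= N)%N -> `|rs b r N| <= eps) ->
  forall n, b n = 0.
Proof.
move=> hC hS; have C0 : 0 <= C := le_trans (normr_ge0 _) (hC 0%N).
elim/ltn_ind => m IH.
have z r j : (j <= m)%N -> rs b r j = 0.
  elim: j => [//|j IHj] hj /=; rewrite IHj ?(ltnW hj) // IH // mulr0 addr0 //.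
have tail r (r0 : 0 < r) (r1 : r <= 1/2) k :
    `|rs b r (m.+1 + k) - r ^+ m * b m| <= 2 * C * r ^+ m.+1 - 2 * C * r ^+ (m.+1 + k).
  elim: k => [|k IHk].
    by rewrite addn0 /= z // add0r subrr normr0 subrr.
  rewrite addnS /= addrAC.
  apply: le_trans (ler_normD _ _) _.
  have P0 : 0 <= r ^+ (m.+1 + k) by apply: exprn_ge0; apply: ltW.
  have hb : `|r ^+ (m.+1 + k) * b (m.+1 + k)| <= r ^+ (m.+1 + k) * C.
    by rewrite normrM ger0_norm //; apply: ler_wpM2l.
  have : 0 <= C * r ^+ (m.+1 + k) * (1 - 2 * r).
    by apply: mulr_ge0; [apply: mulr_ge0 | lra].
  rewrite (exprS r (m.+1 + k)); nra.
have bnd r (r0 : 0 < r) (r1 : r <= 1/2) : `|b m| <= 2 * C * r.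
  have Pm : 0 < r ^+ m by apply: exprn_gt0.
  suff : r ^+ m * `|b m| <= r ^+ m * (2 * C * r).
    by rewrite ler_pM2l.
  apply/ler_addgt0Pr => eps ep.
  have [N0 hN0] := hS r r0 r1 eps ep.
  have h1 := hN0 (m.+1 + N0)%N (leq_addl _ _).
  have h2 := tail r r0 r1 N0.
  have h3 : `|r ^+ m * b m| <= `|rs b r (m.+1 + N0)| + `|rs b r (m.+1 + N0) - r ^+ m * b m|.
    rewrite {1}(_ : r ^+ m * b m = rs b r (m.+1 + N0) - (rs b r (m.+1 + N0) - r ^+ m * b m)).
      exact: ler_normB.
    by rewrite opprB addrCA subrr addr0.
  rewrite normrM ger0_norm ?(ltW Pm) in h3.
  have : 0 <= 2 * C * r ^+ (m.+1 + N0).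
    by apply: mulr_ge0; [lra | apply: exprn_ge0; apply: ltW].
  rewrite (exprS r m) in h2; lra.
  by [].
apply: eps0 => eps ep.
set t := eps / (2 * C + 1).
have t0 : 0 < t by apply: divr_gt0 => //; lra.
have tE : t * (2 * C + 1) = eps by rewrite /t divfK //; lra.
have [ht|ht] := lerP t (1/2).
  have := bnd t t0 ht; nra.
have h12 : (0 : R) < 1/2 by lra.
have := bnd (1/2) h12 (lexx _); nra.
Qed.

Lemma ip_zero' a b : g a b = 0 -> g ('i%C *: a) b = 0 -> ip a b = 0.
Proof.
rewrite /g ipZl ReMi => h1 h2; apply: ReIm0 => //; lra.
Qed.

Lemma g_ps d V r a N : g d (ps V r a N) = rs (fun n => g d (iter n V a)) r N.
Proof. by elim: N => [|N IH] /=; rewrite ?g0r // gDr gZr IH. Qed.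

Lemma orth_iter (V : H -> H) (hV : forall x, nn (V x) <= nn x) (a d : H) :
  (forall r w, 0 < r -> r <= 1/2 -> hconverges ip (ps V r a) w -> ip d w = 0) ->
  forall n, ip d (iter n V a) = 0.
Proof.
move=> h.
have key d' : (forall r w, 0 < r -> r <= 1/2 -> hconverges ip (ps V r a) w -> g d' w = 0) ->
    forall n, g d' (iter n V a) = 0.
  move=> h'; apply: (@extract _ (nn d' * nn a)).
    move=> n; apply: le_trans (CS _ _) _; apply: ler_wpM2l; first exact: nn_ge0.
    exact: nn_iter.
  move=> r r0 r1 eps ep.
  have [w hw] := ps_conv V hV r a (ltW r0) r1.
  have pos : 0 < nn d' + 1 by have := nn_ge0 d'; lra.
  have [N0 hN0] := conv_small _ _ _ hw (divr_gt0 ep pos).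
  exists N0 => N hN; rewrite -g_ps.
  have e : g d' (ps V r a N) = - g d' (w - ps V r a N).
    by rewrite gBr (h' r w r0 r1 hw) sub0r opprK.
  rewrite e normrN; apply: le_trans (CS _ _) _.
  have := hN0 N hN; rewrite ltr_pdivlMr // => q.
  have := nn_ge0 d'; have := nn_ge0 (w - ps V r a N); nra.
move=> n; apply: ip_zero'.
  by apply: key => r w r0 r1 hw; rewrite /g (h r w r0 r1 hw).
by apply: key => r w r0 r1 hw; rewrite /g ipZl (h r w r0 r1 hw) mulr0.
Qed.

Lemma lim_orth (u : nat -> H) l w : (forall n, ip (u n) w = 0) ->
  hconverges ip u l -> ip l w = 0.
Proof.
move=> h hc.
have key w' : (forall n, g (u n) w' = 0) -> g l w' = 0.
  move=> h'; apply: eps0 => eps ep.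
  have pos : 0 < nn w' + 1 by have := nn_ge0 w'; lra.
  have [N0 hN0] := conv_small _ _ _ hc (divr_gt0 ep pos).
  have e : g l w' = g (l - u N0) w' by rewrite gBl h' subr0.
  rewrite e; apply: le_trans (CS _ _) _.
  have := hN0 N0 (leqnn _); rewrite ltr_pdivlMr // => q.
  have := nn_ge0 w'; have := nn_ge0 (l - u N0); nra.
apply: ip_zero.
  by apply: key => n; rewrite /g h.
by apply: key => n; rewrite /g ipZr h mulr0.
Qed.

Definition M1 : set H := [set h | forall n u,
  ip h (iter n Ts (D u)) = 0 /\ ip h (iter n T (Ds u)) = 0].

Lemma M1_closed : closed_subspace ip M1.
Proof.
split.
- by move=> n u; rewrite !ip0l.
- move=> a x y hx hy n u; have [x1 x2] := hx n u; have [y1 y2] := hy n u.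
  by rewrite !ipLin x1 x2 y1 y2 mulr0 addr0.
- move=> u l hu hc n v; split; apply: (lim_orth u) => // m.
    by have [] := hu m n v.
  by have [] := hu m n v.
Qed.

Lemma M1_D h : M1 h -> D h = 0.
Proof.
move=> hM; have [e _] := hM 0%N (D h); rewrite /= ipD_sym in e.
exact: ipD.
Qed.

Lemma M1_Ds h : M1 h -> Ds h = 0.
Proof.
move=> hM; have [_ e] := hM 0%N (Ds h); rewrite /= ipDs_sym in e.
exact: ipD.
Qed.

Lemma M1_T h : M1 h -> M1 (T h).
Proof.
move=> hM n u; split.
  by rewrite adj; have [e _] := hM n.+1 u.
case: n => [|n] /=.
  by rewrite adj TsDs; have [e _] := hM 0%N (Ts u).
rewrite adj TsT ipBr; have [_ e1] := hM n u; have [e2 _] := hM 0%N (iter n T (Ds u)).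
by rewrite e1 e2 subr0.
Qed.

Lemma M1_Ts h : M1 h -> M1 (Ts h).
Proof.
move=> hM n u; split; last first.
  by rewrite adj'; have [_ e] := hM n.+1 u.
case: n => [|n] /=.
  by rewrite adj' TD'; have [_ e] := hM 0%N (T u).
rewrite adj' TTs ipBr; have [e1 _] := hM n u; have [_ e2] := hM 0%N (iter n Ts (D u)).
by rewrite e1 e2 subr0.
Qed.

Hypothesis hcnu : cnu ip T.

Lemma M1_zero : M1 = [set 0].
Proof.
apply: hcnu; first exact: M1_closed.
  apply/seteqP; split.
    by move=> z [x hx <-]; apply: M1_T.
  move=> h hh; exists (Ts h); first exact: M1_Ts.
  by rewrite TTs M1_Ds // subr0.
move=> x y hx hy; rewrite adj TsT ipBr M1_D // ip0r subr0 //.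
Qed.

Lemma normrC (r : R) : 0 < r -> r <= 1/2 -> `|((r%:C)%C : R[i])| < 1.
Proof.
move=> r0 r1; rewrite normc_def /= expr0n /= addr0 sqrtr_sqr ltcR ger0_norm ?(ltW r0) //.
lra.
Qed.

Lemma rC_neq0 (r : R) : 0 < r -> ((r%:C)%C : R[i]) != 0.
Proof. move=> r0; rewrite eq_complex /= eqxx andbT; apply/eqP => e; move: r0; rewrite e ltxx. done. Qed.

Lemma main x y :
    in_hat ip T Ts (A_T T Ts) (hat ip x, hat ip y) <->
    ((forall z : R[i], `|z| < 1 -> forall w, Fdag ip T Ts (Dp z) w ->
        hat ip y (Dp z) w = z * hat ip x (Dp z) w) /\
     (forall z : R[i], `|z| < 1 -> forall w, Fdag ip T Ts (Dm z) w ->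
        z * hat ip y (Dm z) w = hat ip x (Dm z) w)).
Proof.
split.
  move=> [x' [y' [[k hk [e1 e2]] [hx hy]]]]; subst x' y'.
  split.
    move=> z _ w hw; have := hx _ _ hw; have := hy _ _ hw; rewrite /hat /= => <- <-.
    exact: fwdDp.
  move=> z _ w hw; have := hx _ _ hw; have := hy _ _ hw; rewrite /hat /= => <- <-.
  by rewrite (fwdDm k z w hk hw).
move=> [hP hQ].
have xK : Kset T Ts x.
  have hw : Fdag ip T Ts (Dm 0) (D (D x)).
    apply/FdagDm => k hk.
    by rewrite rmorph0 scale0r ip0l mulr0 subr0 -ipD_sym (_ : D k = 0) // ip0r mulr0.
  have n0 : `|(0 : R[i])| < 1 by rewrite normr0 ltr01.
  have := hQ 0 n0 (D (D x)) hw; rewrite /hat mul0r => /esym.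
  by rewrite ipD_sym => /ipD.
have dM : M1 (y - T x).
  move=> n u; split.
    apply: (orth_iter Ts nnTs (D u)) => r w r0 r1 hw.
    have hF := memDm r u w r0 r1 hw.
    have := hQ _ (normrC r r0 r1) w hF; rewrite /hat (fwdDm x _ w xK hF) => e.
    by rewrite ipBl; apply/eqP; rewrite subr_eq0; apply/eqP; apply: (mulfI (rC_neq0 r r0)).
  apply: (orth_iter T nnT (Ds u)) => r w r0 r1 hw.
  have hF := memDp r u w r0 r1 hw.
  have := hP _ (normrC r r0 r1) w hF; rewrite /hat -(fwdDp x _ w xK hF) => e.
  by rewrite ipBl e subrr.
have yE : y = T x.
  by move: dM; rewrite M1_zero => /= /subr0_eq.
exists x, (T x); split; first by exists x.
by split => l w _; rewrite /hat /= ?yE.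
Qed.

End Basic.

Theorem proposition4p10 (R : realType) (H : lmodType R[i]) (ip : H -> H -> R[i])
  (T Tstar : H -> H) :
  hilbert_space ip -> hlinear T -> is_adjoint ip T Tstar ->
  contraction ip T -> cnu ip T ->
  forall x y : H,
    in_hat ip T Tstar (A_T T Tstar) (hat ip x, hat ip y) <->
    ((forall z : R[i], `|z| < 1 -> forall w, Fdag ip T Tstar (Dp z) w ->
        hat ip y (Dp z) w = z * hat ip x (Dp z) w) /\
     (forall z : R[i], `|z| < 1 -> forall w, Fdag ip T Tstar (Dm z) w ->
        z * hat ip y (Dm z) w = hat ip x (Dm z) w)).
Proof.
move=> [hip hcomp _ _] hl ha hc hcn x y.
exact: (@main R H ip T Tstar hip hl ha hc hcomp hcn x y).
Qed.
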